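(* Let $e\ge3$ be odd, $m\in\mathbb N$, $t\in\{0,1\}$, and $\mathbf c=(t+(1-e)/2,0)$. Then the vertex $|(\emptyset,1^m),\mathbf c\rangle$ of the crystal graph $\mathcal G_{\mathbf c,e}$ is a highest weight vertex if and only if $e\mid 2m+t$ or $e\mid 2m+t-1$.
   Context: Crystal graph $\mathcal G_{\mathbf c,e}$ for $\mathbf c=(c_1,c_2)\in\mathbb Z^2$: vertices are $|\mu,\mathbf c\rangle$ for all bipartitions $\mu=(\mu^1,\mu^2)$. A node of $\mu$ is $(a,b,j)$ with $(a,b)$ (row $a$, column $b$) in the Young diagram of $\mu^j$; content $b-a+c_j$, residue = content mod $e$. A node $\gamma$ is addable (resp. removable) if $\mu\cup\{\gamma\}$ (resp. $\mu\setminus\{\gamma\}$) is a bipartition. For $i\in\{0,\dots,e-1\}$ order the addable and removable $i$-nodes by $\gamma\prec\gamma'$ iff $\mathrm{cont}(\gamma)<\mathrm{cont}(\gamma')$ or contents equal and $j>j'$; write them in increasing order as a word in $A$ (addable), $R$ (removable), and delete recursively consecutive $RA$, giving $A^\alpha R^\beta$; if $\alpha>0$, the good addable $i$-node is that of the rightmost $A$. Edge $|\mu,\mathbf c\rangle\xrightarrow{i}|\nu,\mathbf c\rangle$ iff $\nu$ is $\mu$ plus its good addable $i$-node. A highest weight vertex is a vertex with no incoming edges. *)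

(* Defs.v *)
From mathcomp Require Import all_boot all_order all_algebra.
Set Implicit Arguments. Unset Strict Implicit. Unset Printing Implicit Defensive.
Import GRing.Theory Num.Theory.

Definition is_partition (p : seq nat) : bool :=
  sorted geq p && all (fun x => 0 < x) p.

Definition bipartition := (seq nat * seq nat)%type.
Definition is_bipartition (mu : bipartition) : bool :=
  is_partition mu.1 && is_partition mu.2.

Definition comp (mu : bipartition) (j : nat) : seq nat :=
  if j == 1 then mu.1 else mu.2.

(** A node (a, b, j): row a >= 1, column b >= 1, component j in {1,2}. *)
Definition node := (nat * nat * nat)%type.
Definition nrow (g : node) := g.1.1.
Definition ncol (g : node) := g.1.2.
Definition ncomp (g : node) := g.2.

Definition in_bip (mu : bipartition) (g : node) : bool :=
  [&& (ncomp g == 1) || (ncomp g == 2), 0 < nrow g, 0 < ncol g &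
      ncol g <= nth 0 (comp mu (ncomp g)) (nrow g).-1].

(** gamma is addable: gamma is not in mu and mu u {gamma} is a Young diagram
    (i.e. its upper and left neighbours, when they exist, lie in mu). *)
Definition addable (mu : bipartition) (g : node) : bool :=
  let: (a, b, j) := g in
  [&& (j == 1) || (j == 2), 0 < a, 0 < b, ~~ in_bip mu g,
      (a == 1) || in_bip mu (a.-1, b, j) &
      (b == 1) || in_bip mu (a, b.-1, j)].

(** gamma is removable: gamma is in mu and mu \ {gamma} is a Young diagram
    (i.e. its lower and right neighbours are not in mu). *)
Definition removable (mu : bipartition) (g : node) : bool :=
  let: (a, b, j) := g in
  [&& in_bip mu g, ~~ in_bip mu (a.+1, b, j) & ~~ in_bip mu (a, b.+1, j)].

Definition content (c : int * int) (g : node) : int :=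
  let: (a, b, j) := g in
  (Posz b - Posz a + (if j == 1 then c.1 else c.2))%R.

Definition residue_is (c : int * int) (e i : nat) (g : node) : bool :=
  ((content c g %% Posz e)%Z == Posz i).

(** A finite box containing all addable and removable nodes of mu. *)
Definition candidates (mu : bipartition) : seq node :=
  flatten [seq flatten [seq [seq (a, b, j) | b <- iota 1 (head 0 (comp mu j)).+1]
                         | a <- iota 1 (size (comp mu j)).+1]
          | j <- [:: 1; 2]].

(** Letters of the word: (true, g) is an A (addable), (false, g) an R. *)
Definition letter := (bool * node)%type.

Definition node_le (c : int * int) (g g' : node) : bool :=
  (content c g < content c g')%R ||
  ((content c g == content c g') && (ncomp g' <= ncomp g)).

Definition iword (c : int * int) (e i : nat) (mu : bipartition) : seq letter :=
  sort (fun x y : letter => node_le c x.2 y.2)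
    ([seq (true, g) | g <- candidates mu & addable mu g && residue_is c e i g]
     ++ [seq (false, g) | g <- candidates mu & removable mu g && residue_is c e i g]).

Fixpoint delete_RA (w : seq letter) : seq letter :=
  match w with
  | (false, g) :: (true, g') :: w' => w'
  | x :: w' => x :: delete_RA w'
  | [::] => [::]
  end.

(** Delete recursively consecutive R A (size w iterations suffice). *)
Definition reduce_word (w : seq letter) : seq letter := iter (size w) delete_RA w.

Definition good_addable (c : int * int) (e i : nat) (mu : bipartition) : option node :=
  let As := [seq x.2 | x <- reduce_word (iword c e i mu) & x.1] in
  if As is [::] then None else Some (last (head (0,0,0) As) As).

Definition crystal_edge (c : int * int) (e i : nat) (lam nu : bipartition) : Prop :=
  [/\ is_bipartition lam, is_bipartition nu &
      exists g, good_addable c e i lam = Some g /\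
                forall x, in_bip nu x = (x == g) || in_bip lam x].

Definition highest_weight (c : int * int) (e : nat) (mu : bipartition) : Prop :=
  is_bipartition mu /\
  forall (lam : bipartition) (i : nat), i < e -> ~ crystal_edge c e i lam mu.

(* Main.v *)
Require Import Defs.
From mathcomp Require Import all_boot all_order all_algebra zify.
Set Implicit Arguments. Unset Strict Implicit. Unset Printing Implicit Defensive.
Import GRing.Theory Num.Theory.
Definition lamn (n : nat) : bipartition := ([::], nseq n 1).
Lemma in_bip_lamn n a b j : in_bip (lamn n) (a,b,j) = [&& j == 2, b == 1, 0 < a & a <= n].
Proof.
rewrite /in_bip /Defs.comp /nrow /ncol /ncomp /=.
case: (j =P 1) => [->|hj] /=; first by rewrite nth_nil; lia.
rewrite nth_nseq; case: ifP => h; lia.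
Qed.

Lemma addable_lamn n a b j : addable (lamn n) (a,b,j) ->
  [|| [&& a==1, b==1 & j==1], [&& a == n.+1, b==1 & j==2] | [&& 0<n, a==1, b==2 & j==2]].
Proof. rewrite /addable !in_bip_lamn; lia. Qed.

Lemma removable_lamn n a b j : removable (lamn n) (a,b,j) -> [&& a==n, b==1 & j==2].
Proof. rewrite /removable !in_bip_lamn; lia. Qed.

Lemma delete_RA_sub w : {subset delete_RA w <= w}.
Proof.
elim: w => [|[b x] w IH] //=.
case: b.
- move=> y; rewrite !inE => /orP[->//|/IH ->]; by rewrite orbT.
- case: w IH => [|[b' x'] w'] IH //=.
  case: b' IH => IH y.
  + by rewrite !inE => ->; rewrite !orbT.
  + rewrite !inE => /orP[->//|/IH]; rewrite !inE => ->; by rewrite orbT.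
Qed.

Lemma reduce_word_sub w : {subset reduce_word w <= w}.
Proof.
rewrite /reduce_word; elim: (size w) => [|k IH] //= y /delete_RA_sub; exact: IH.
Qed.

Lemma delete_RA_id w : all fst w -> delete_RA w = w.
Proof.
elim: w => [|[b x] w IH] //= /andP[hb hw]; move: hb => /= ->.
by rewrite IH.
Qed.

Lemma reduce_word_id w : all fst w -> reduce_word w = w.
Proof.
move=> h; rewrite /reduce_word; elim: (size w) => [|k IH] //=; by rewrite IH delete_RA_id.
Qed.

Lemma iword_true c e i mu g : (true, g) \in iword c e i mu ->
  [&& g \in candidates mu, addable mu g & residue_is c e i g].
Proof.
rewrite /iword mem_sort mem_cat => /orP[/mapP[x] | /mapP[x]] //.
by rewrite mem_filter => /andP[/andP[h1 h2] h3] [->]; rewrite h1 h2 h3.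
Qed.

Lemma iword_false c e i mu g : (false, g) \in iword c e i mu ->
  [&& g \in candidates mu, removable mu g & residue_is c e i g].
Proof.
rewrite /iword mem_sort mem_cat => /orP[/mapP[x] | /mapP[x]] //.
by rewrite mem_filter => /andP[/andP[h1 h2] h3] [->]; rewrite h1 h2 h3.
Qed.

Lemma iword_in c e i mu g : g \in candidates mu -> addable mu g -> residue_is c e i g ->
  (true, g) \in iword c e i mu.
Proof.
move=> h1 h2 h3; rewrite /iword mem_sort mem_cat; apply/orP; left.
by apply: map_f; rewrite mem_filter h1 h2 h3.
Qed.

Lemma good_addable_mem c e i mu g : good_addable c e i mu = Some g ->
  (true, g) \in iword c e i mu.
Proof.
rewrite /good_addable.
case E: [seq x.2 | x <- reduce_word (iword c e i mu) & x.1] => [|a As] //= [<-].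
have : last a As \in [seq x.2 | x <- reduce_word (iword c e i mu) & x.1].
  by rewrite E mem_last.
case/mapP => [[b y]]; rewrite mem_filter /= => /andP[hb hy] ->.
move: hb hy => -> /reduce_word_sub //.
Qed.

Lemma node_le_total c : total (fun x y : letter => node_le c x.2 y.2).
Proof.
move=> x y; rewrite /node_le.
set a := content c x.2; set b := content c y.2.
case: (leq_total (ncomp x.2) (ncomp y.2)) => h; lia.
Qed.

Lemma node_le_trans c : transitive (node_le c).
Proof.
move=> y x z; rewrite /node_le.
set a := content c x; set b := content c y; set d := content c z.
lia.
Qed.

Lemma node_le_refl c : reflexive (node_le c).
Proof. move=> x; by rewrite /node_le eqxx leqnn orbT. Qed.

Lemma sorted_last_max (T : eqType) (r : rel T) x0 s y :
  transitive r -> reflexive r -> sorted r s -> y \in s -> r y (last x0 s).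
Proof.
move=> tr rf so ys.
have hs : 0 < size s by rewrite lt0n size_eq0; apply/eqP => E; rewrite E in ys.
rewrite -nth_last -(nth_index x0 ys).
apply: (sorted_leq_nth tr rf x0 so); have hi : index y s < size s by rewrite index_mem.
all: rewrite ?inE /=; lia.
Qed.

Lemma GA_unique c e i mu g :
  (forall x, (true, x) \in iword c e i mu -> x = g) ->
  (forall x, (false, x) \notin iword c e i mu) ->
  (true, g) \in iword c e i mu ->
  good_addable c e i mu = Some g.
Proof.
move=> ht hf hg.
have hall : all fst (iword c e i mu).
  apply/allP => [[b x]] hx /=; case: b hx => // hx; by move: (hf x); rewrite hx.
rewrite /good_addable reduce_word_id // (all_filterP hall).
case E: (iword c e i mu) => [|a w]; first by rewrite E in hg.
rewrite /=. have : last a.2 [seq x.2 | x <- w] \in [seq x.2 | x <- a :: w] by apply: mem_last.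
case/mapP => [[b y]] hy ->; rewrite -E in hy.
case: b hy => hy; first by rewrite (ht _ hy).
by move: (hf y); rewrite hy.
Qed.

Lemma GA_max c e i mu g y :
  (forall x, (false, x) \notin iword c e i mu) ->
  good_addable c e i mu = Some g ->
  (true, y) \in iword c e i mu -> node_le c y g.
Proof.
move=> hf hg hy.
have hall : all fst (iword c e i mu).
  apply/allP => [[b x]] hx /=; case: b hx => // hx; by move: (hf x); rewrite hx.
move: hg; rewrite /good_addable reduce_word_id // (all_filterP hall).
have so : sorted (node_le c) [seq x.2 | x <- iword c e i mu].
  rewrite sorted_map; apply: sort_sorted; exact: node_le_total.
have hy' : y \in [seq x.2 | x <- iword c e i mu] by apply: (map_f snd hy).
case E: [seq x.2 | x <- iword c e i mu] so hy' => [|a As] //= so hy' [<-].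
by have := @sorted_last_max _ (node_le c) a (a :: As) y (@node_le_trans c) (@node_le_refl c) so hy'.
Qed.

Lemma cand_mem mu a b j : (j == 1) || (j == 2) -> 0 < a <= (size (Defs.comp mu j)).+1 ->
  0 < b <= (head 0 (Defs.comp mu j)).+1 -> (a,b,j) \in candidates mu.
Proof.
move=> hj ha hb; rewrite /candidates; apply/flattenP; eexists.
  apply/mapP; exists j; [by rewrite !inE | reflexivity].
apply/flattenP; eexists.
  apply/mapP; exists a; [rewrite mem_iota; lia | reflexivity].
apply/mapP; exists b; [rewrite mem_iota; lia | reflexivity].
Qed.

Lemma is_partition_nseq n : is_partition (nseq n 1).
Proof.
rewrite /is_partition; apply/andP; split.
  elim: n => [|n IH] //=; case: n IH => //= n ->; by [].
by apply/allP => x /nseqP [->].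
Qed.

Lemma is_bip_lamn n : is_bipartition (lamn n).
Proof. by rewrite /is_bipartition /= is_partition_nseq. Qed.

Lemma lam_det m lam g : is_bipartition lam -> addable lam g ->
  (forall x, in_bip (lamn m) x = (x == g) || in_bip lam x) ->
  [/\ 0 < m, g = (m,1,2) & lam = lamn m.-1].
Proof.
case: lam => p1 p2; case: g => [[a0 b0] j0] /andP[/= hp1 hp2] hadd hin.
have hnot : ~~ in_bip (p1,p2) (a0,b0,j0).
  by move: hadd; rewrite /addable => /and5P[_ _ _ hn _].
have := hin (a0,b0,j0); rewrite eqxx /= in_bip_lamn => /and4P[/eqP hj /eqP hb ha1 ha2].
subst j0 b0.
have ib2 a b : in_bip (p1,p2) (a,b,2) = [&& 0<a, 0<b & b <= nth 0 p2 a.-1].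
  by rewrite /in_bip /Defs.comp.
have -> : p1 = [::].
  case: p1 hp1 hin {hnot hadd ib2} => [//|h p1'] hp1 hin.
  move: hp1 => /andP[_ /andP[hh _]].
  have := hin (1,1,1); rewrite in_bip_lamn /in_bip /Defs.comp /ncol /= !xpair_eqE => H; exfalso; lia.
have h2 k : nth 0 p2 k <= 1.
  have := hin (k.+1,2,2); rewrite in_bip_lamn ib2 !xpair_eqE /=; lia.
have h0 : nth 0 p2 a0.-1 = 0 by move: hnot; rewrite ib2; lia.
have h1 k : k < m -> k != a0.-1 -> 0 < nth 0 p2 k.
  have := hin (k.+1,1,2); rewrite in_bip_lamn ib2 !xpair_eqE /=; lia.
have hs i j : i <= j -> nth 0 p2 j <= nth 0 p2 i.
  move=> hij; case: (ltnP j (size p2)) => hj; last by rewrite nth_default.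
  have tr : transitive geq by move=> ? ? ? /=; lia.
  have rf : reflexive geq by move=> ? /=.
  move: hp2 => /andP[so _].
  have := sorted_leq_nth tr rf 0 so; move=> /(_ i j); rewrite !inE /=; apply; lia.
have ham : a0 = m.
  case: (ltnP a0 m) => ha; last lia.
  have := h1 a0 ha; have := hs a0.-1 a0; lia.
subst a0.
have hpos k : k < size p2 -> 0 < nth 0 p2 k.
  move=> hk; move: hp2 => /andP[_ /allP hal]; exact: (hal _ (mem_nth 0 hk)).
have hsz : size p2 = m.-1.
  case: (ltngtP (size p2) m.-1) => // hsz.
    have := h1 (size p2); rewrite nth_default //; lia.
  have := hpos m.-1; lia.
split => //; rewrite /lamn; congr pair.
apply: (@eq_from_nth _ 0); first by rewrite size_nseq.
move=> k hk; rewrite nth_nseq; rewrite hsz in hk; rewrite hk.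
have := h2 k; have := h1 k; lia.
Qed.

Lemma c1_eq e k : e = k.*2.+1 -> ((1 - Posz e) %/ 2)%Z = (- Posz k)%R.
Proof.
move=> ->; rewrite (_ : (1 - _)%R = ((- Posz k) * 2)%R); first by rewrite mulzK.
lia.
Qed.

Lemma dvd_eq (d a b : int) : a = b -> (d %| b)%Z -> (d %| a)%Z.
Proof. by move=> ->. Qed.

Lemma arith e k m t : e = k.*2.+1 -> t <= 1 ->
 ((Posz e %| Posz (2 * m + t))%Z \/ (Posz e %| (Posz (2 * m + t) - 1)%R)%Z) <->
 ((Posz e %| Posz m)%Z \/ (Posz e %| (Posz t - Posz k - 1 + Posz m)%R)%Z).
Proof.
move=> -> ht.
have : t = 0 \/ t = 1 by lia.
case=> ->; split.
- case=> /dvdzP[q hq]; [left | right]; apply/dvdzP.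
    exists (Posz m - q * Posz k)%R; nia.
  exists (Posz 0 - Posz k - 1 + Posz m - (q - 1) * Posz k)%R; nia.
- case=> /dvdzP[q hq]; [left | right]; apply/dvdzP.
    exists (2 * q)%R; nia.
  exists (2 * q + 1)%R; nia.
- case=> /dvdzP[q hq]; [right | left]; apply/dvdzP.
    exists (Posz 1 - Posz k - 1 + Posz m - (q - 1) * Posz k)%R; nia.
  exists (Posz m - q * Posz k)%R; nia.
- case=> /dvdzP[q hq]; [right | left]; apply/dvdzP.
    exists (2 * q)%R; nia.
  exists (2 * q + 1)%R; nia.
Qed.

Lemma res_dvd c e i x y : residue_is c e i x -> residue_is c e i y ->
  (Posz e %| (content c y - content c x)%R)%Z.
Proof. by rewrite /residue_is -eqz_mod_dvd => /eqP h1 /eqP h2; rewrite h1 h2. Qed.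

Lemma res_of c e i x y : residue_is c e i x -> (Posz e %| (content c y - content c x)%R)%Z ->
  residue_is c e i y.
Proof. by rewrite /residue_is -eqz_mod_dvd => /eqP h1 /eqP h2; rewrite h2 h1. Qed.

Lemma no_R c e i n : 3 <= e -> residue_is c e i (n.+1,1,2) ->
  forall x, (false,x) \notin iword c e i (lamn n).
Proof.
move=> he hres [[a b] j]; apply/negP => /iword_false /and3P[_ /removable_lamn hr hr2].
have := res_dvd hres hr2.
move: hr => /and3P[/eqP -> /eqP -> /eqP ->] /= /dvdzP [q hq]; have hq1 : (q * e = 1)%R by lia.
have : (q <= 0 \/ 1 <= q)%R by lia.
case => h; nia.
Qed.

Theorem proposition7p5 (e m t : nat) :
  3 <= e -> odd e -> t <= 1 ->
  highest_weight (Posz t + ((1 - Posz e) %/ 2)%Z, 0)%R e ([::], nseq m 1)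
  <-> ((Posz e %| Posz (2 * m + t))%Z \/ (Posz e %| (Posz (2 * m + t) - 1)%R)%Z).
Proof.
move=> he oe ht.
have ek : e = (e./2).*2.+1 by rewrite -[LHS]odd_double_half oe add1n.
set k := e./2 in ek.
rewrite (arith m ek ht) (c1_eq ek).
set c := ((Posz t + - Posz k)%R, 0%R).
change ([::], nseq m 1) with (lamn m).
split.
-
  case=> _ hw.
  case: m hw => [|n] hw; first by left; exact: dvdz0.
  case: (boolP (Posz e %| Posz n.+1)%Z) => h1; first by left.
  case: (boolP (Posz e %| (Posz t - Posz k - 1 + Posz n.+1)%R)%Z) => h2; first by right.
  exfalso.
  set g : node := (n.+1, 1, 2).
  set i := `|(content c g %% Posz e)%Z|%N.
  have hm0 : (0 <= (content c g %% Posz e)%Z)%R by apply: modz_ge0; lia.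
  have hm1 : ((content c g %% Posz e)%Z < Posz e)%R by apply: ltz_pmod; lia.
  have hres : residue_is c e i g by rewrite /residue_is /i gez0_abs.
  have hi : i < e by rewrite /i; lia.
  apply: (hw (lamn n) i hi); split; [exact: is_bip_lamn | exact: is_bip_lamn |].
  exists g; split; last first.
    move=> [[a b] j]; rewrite !in_bip_lamn /g !xpair_eqE; lia.
  apply: GA_unique.
  + move=> [[a b] j] /iword_true /and3P[_ /addable_lamn hA hr].
    have hd := res_dvd hres hr.
    case/or3P: hA.
    * move=> /and3P[/eqP ha /eqP hb /eqP hj]; subst a b j; exfalso; move/negP: h2; apply.
      by apply: (dvd_eq _ hd); rewrite /= /c /=; lia.
    * by move=> /and3P[/eqP ha /eqP hb /eqP hj]; subst a b j.
    * move=> /and4P[_ /eqP ha /eqP hb /eqP hj]; subst a b j; exfalso; move/negP: h1; apply.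
      by apply: (dvd_eq _ hd); rewrite /=; lia.
  + exact: no_R.
  + apply: iword_in => //.
      apply: cand_mem => //=; rewrite size_nseq; lia.
    rewrite /g /addable !in_bip_lamn; lia.
-
  move=> hD; split; first exact: is_bip_lamn.
  move=> lam i hi [hlam _ [g [hga hin]]].
  have /and3P[_ hadd hres] := iword_true (good_addable_mem hga).
  have [m0 eg el] := lam_det hlam hadd hin; subst g lam.
  clear hlam hadd; case: m hD m0 hin hga hres => [//|n] hD _ hin hga hres /=.
  have hf := no_R he hres.
  case: hD => /dvdzP[q hq].
    have hn : 0 < n.
      have : (q <= 0 \/ 1 <= q)%R by lia.
      case => ?; nia.
    have hy : (true, (1,2,2)) \in iword c e i (lamn n).
      apply: iword_in.
      * apply: cand_mem => //=; rewrite /Defs.comp /=; by case: (n) hn.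
      * rewrite /addable !in_bip_lamn; lia.
      * apply: (res_of hres); apply/dvdzP; exists q; rewrite /=; lia.
    have := GA_max hf hga hy; rewrite /node_le /=; lia.
  + have hx : (0 <= q)%R by nia.
    have hy : (true, (1,1,1)) \in iword c e i (lamn n).
      apply: iword_in.
      * by apply: cand_mem.
      * rewrite /addable !in_bip_lamn; lia.
      * apply: (res_of hres); apply/dvdzP; exists q; rewrite /= /c /=; lia.
    have := GA_max hf hga hy; rewrite /node_le /= /c /=; nia.
Qed.
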